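(* Let $N\ge 1$ be an integer and $a>0$ real. Let $H=H^{(N)}(a)$ be the real $N\times N$ tridiagonal matrix with entries $H_{nn}=a+2n-1$ ($n=1,\dots,N$), $H_{n,n+1}=-n$ and $H_{n+1,n}=-(a+n)$ ($n=1,\dots,N-1$), all other entries zero. Let $\Theta_0=\Theta_0^{(N)}(a)$ be the diagonal $N\times N$ matrix with $\theta_{11}=1$ and $$\theta_{nn}=\frac{(n-1)!}{(a+n-1)(a+n-2)\cdots(a+2)(a+1)},\qquad n=2,3,\dots,N.$$ Then $\Theta_0$ is positive definite and satisfies $H^\dagger\Theta_0=\Theta_0 H$, i.e. $\Theta_0$ is a (diagonal) metric making $H$ Hermitian in the inner product $\langle x,y\rangle_{\Theta_0}=x^\dagger\Theta_0 y$.
   Context: $H^\dagger$ denotes the conjugate transpose (here the transpose, $H$ being real). A metric for $H$ is a positive definite Hermitian matrix $\Theta$ with $H^\dagger\Theta=\Theta H$ (Dieudonné relation). *)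

(* Defs.v *)
From mathcomp Require Import all_boot all_order all_algebra.
Set Implicit Arguments. Unset Strict Implicit. Unset Printing Implicit Defensive.
Import Order.TTheory GRing.Theory Num.Theory.
Local Open Scope ring_scope.

(* Indices are 0-based: row/column i : 'I_N corresponds to n = i+1 in the paper. *)

Definition Hmat (R : ringType) (N : nat) (a : R) : 'M[R]_N :=
  \matrix_(i < N, j < N)
    if (j == i :> nat) then a + (2 * i.+1 - 1)%N%:R
    else if (j == i.+1 :> nat) then - (i.+1)%:R
    else if (i == j.+1 :> nat) then - (a + (j.+1)%:R)
    else 0.

(* theta_{nn} = (n-1)! / ((a+n-1)(a+n-2)...(a+1)), theta_{11} = 1 (empty product). *)
Definition theta (R : fieldType) (a : R) (n : nat) : R :=
  ((n.-1)`!)%:R / \prod_(1 <= k < n) (a + k%:R).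

Definition Theta0 (R : fieldType) (N : nat) (a : R) : 'M[R]_N :=
  \matrix_(i < N, j < N) if i == j then theta a i.+1 else 0.

Definition posdef (R : numFieldType) (N : nat) (M : 'M[R]_N) : Prop :=
  M^T = M /\ forall x : 'cV[R]_N, x != 0 -> 0 < (x^T *m M *m x) 0 0.

(* Main.v *)
Require Import Defs.
From mathcomp Require Import all_boot all_order all_algebra.
From mathcomp Require Import ring.
Import Order.TTheory GRing.Theory Num.Theory.
Local Open Scope ring_scope.

Lemma prod_pos (R : realFieldType) (a : R) n : 0 < a -> 0 < \prod_(1 <= k < n) (a + k%:R).
Proof. move=> a0; apply: prodr_gt0 => k _; apply: ltr_wpDr => //. Qed.

Lemma theta_pos (R : realFieldType) (a : R) n : 0 < a -> 0 < theta a n.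
Proof.
move=> a0; rewrite /theta divr_gt0 ?prod_pos // ltr0n fact_gt0 //.
Qed.

Lemma theta_rec (R : realFieldType) (a : R) n : 0 < a ->
  (a + n.+1%:R) * theta a n.+2 = n.+1%:R * theta a n.+1.
Proof.
move=> a0; rewrite /theta /= big_nat_recr //=.
have h1 := @prod_pos R a n.+1 a0.
have h2 : 0 < a + n.+1%:R by apply: ltr_wpDr.
rewrite factS natrM invfM.
have h3 : a + n.+1%:R != 0 by rewrite gt_eqF.
have h4 : \prod_(1 <= i < n.+1) (a + i%:R) != 0 by rewrite gt_eqF.
set A := a + _; set P := \prod_(_ <= _ < _) _.
by rewrite [P^-1 / A]mulrC mulrCA mulVKf // -mulrA.
Qed.

Lemma mulmx_diag (R : realFieldType) m N a (A : 'M[R]_(m,N)) i j :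
  (A *m Theta0 N a) i j = A i j * theta a j.+1.
Proof.
rewrite !mxE (bigD1 j) //= big1 ?addr0; first by rewrite mxE eqxx.
by move=> k /negbTE kj; rewrite mxE kj mulr0.
Qed.

Lemma diag_mulmx (R : realFieldType) N a (A : 'M[R]_N) i j :
  (Theta0 N a *m A) i j = theta a i.+1 * A i j.
Proof.
rewrite !mxE (bigD1 i) //= big1 ?addr0; first by rewrite mxE eqxx.
by move=> k /negbTE kj; rewrite mxE eq_sym kj mul0r.
Qed.

Theorem lemma1 (R : realFieldType) (N : nat) (a : R) :
  (1 <= N)%N -> 0 < a ->
  posdef (Theta0 N a) /\ (Hmat N a)^T *m Theta0 N a = Theta0 N a *m Hmat N a.
Proof.
move=> _ a0; split; first split.
- by apply/matrixP => i j; rewrite !mxE eq_sym; case: eqP => // ->.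
- move=> x /eqP x0.
  have -> : (x^T *m Theta0 N a *m x) 0 0 = \sum_(i < N) theta a i.+1 * (x i 0 ^+ 2).
    rewrite !mxE; apply: eq_bigr => i _.
    by rewrite mulmx_diag !mxE expr2 mulrAC mulrC.
  case: (pickP (fun i => x i 0 != 0)) => [k xk|H]; last first.
    exfalso; apply: x0; apply/matrixP => k l.
    by rewrite (ord1 l) mxE; apply/eqP/negPn; rewrite H.
  rewrite (bigD1 k) //=; apply: ltr_pwDl.
    by rewrite mulr_gt0 ?theta_pos // exprn_even_gt0.
  by apply: sumr_ge0 => k0 _; rewrite mulr_ge0 ?sqr_ge0 // ltW ?theta_pos.
- apply/matrixP => i j; rewrite mulmx_diag diag_mulmx !mxE.
  case: (eqVneq (i : nat) j) => [/val_inj ->|ij]; first by rewrite mulrC.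
  case: (eqVneq (i : nat) j.+1) => [ei|ni].
    have -> : (j == i.+1 :> nat) = false by rewrite ei; apply/negbTE; rewrite neq_ltn ltnS leqnSn.
    rewrite ei mulNr mulrN -theta_rec // mulrC; done.
  case: (eqVneq (j : nat) i.+1) => [ej|nj].
    rewrite ej mulNr mulrN theta_rec // mulrC; done.
  by rewrite mulr0 mul0r.
Qed.
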